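(* Let $(\mathfrak{A},\mathfrak{A}_0)$ be a CQ*-algebra as in the context, let $H\in\mathfrak{A}_0$ and set $\alpha_t^H(X)=e^{itH}Xe^{-itH}$. Then for every $X\in\mathfrak{A}$: $\lim_{t\to0}\|e^{itH}X-X\|=0$, $\lim_{t\to0}\|Xe^{itH}-X\|=0$, $\lim_{t\to0}\left\|\frac{e^{itH}-I}{t}X-iHX\right\|=0$, $\lim_{t\to0}\left\|X\frac{e^{itH}-I}{t}-iXH\right\|=0$, $\lim_{t\to0}\|\alpha_t^H(X)-X\|=0$, and $\lim_{t\to0}\left\|\frac{\alpha_t^H(X)-X}{t}-i[H,X]\right\|=0$, where $[H,X]=HX-XH$.
   Context: Let $\mathfrak{A}_0$ be a unital C*-algebra with C*-norm $\|\cdot\|_0$ and unit $I$, and $\|\cdot\|$ another norm on $\mathfrak{A}_0$ with $\|A\|\le\|A\|_0$, $\|AB\|\le\|A\|\,\|B\|_0$, $\|A^*\|=\|A\|$. $\mathfrak{A}$ is the $\|\cdot\|$-completion of $\mathfrak{A}_0$ (norm still $\|\cdot\|$), and for $X\in\mathfrak{A}$, $A\in\mathfrak{A}_0$ and $A_n\in\mathfrak{A}_0$ with $\|A_n-X\|\to0$, $XA:=\lim A_nA$, $AX:=\lim AA_n$; these satisfy $\|XA\|\le\|X\|\|A\|_0$, $\|AX\|\le\|A\|_0\|X\|$. $e^{itH}\in\mathfrak{A}_0$ is defined by the functional calculus of $\mathfrak{A}_0$. *)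

(* Defs.v *)
From HB Require Import structures.
From mathcomp Require Import all_boot all_order all_algebra.
From mathcomp Require Import all_classical all_reals all_analysis.
From mathcomp.real_closed Require Import complex.
Import Order.TTheory GRing.Theory Num.Theory.
Import numFieldNormedType.Exports.
Set Implicit Arguments.
Unset Strict Implicit.
Unset Printing Implicit Defensive.
Local Open Scope classical_set_scope.
Local Open Scope ring_scope.
Local Open Scope complex_scope.

(* A unital C*-algebra over C = R[i], presented as a complex Banach space
   (completeNormedModType R[i], carrying the C*-norm `|.|_0 and its
   topology) together with a multiplication, a unit and an involution
   satisfying the usual axioms.  (The ring operations are given explicitly
   because HB cannot join the library's algebra and normed-module
   hierarchies.) *)
Definition is_unital_Cstar (R : realType) (V : completeNormedModType R[i])
    (mul : V -> V -> V) (one : V) (star : V -> V) : Prop :=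
  (forall x y z, mul x (mul y z) = mul (mul x y) z) /\
  (forall x, mul one x = x /\ mul x one = x) /\
  (forall (a : R[i]) x y z, mul (a *: x + y) z = a *: mul x z + mul y z) /\
  (forall (a : R[i]) x y z, mul z (a *: x + y) = a *: mul z x + mul z y) /\
  (forall x y, `|mul x y| <= `|x| * `|y|) /\
  (forall x, star (star x) = x) /\
  (forall (a : R[i]) x y, star (a *: x + y) = a^* *: star x + star y) /\
  (forall x y, star (mul x y) = mul (star y) (star x)) /\
  (forall x, `|mul (star x) x| = `|x| ^+ 2).

Fixpoint cpow (R : realType) (V : completeNormedModType R[i])
    (mul : V -> V -> V) (one : V) (h : V) (n : nat) : V :=
  if n is n'.+1 then mul h (cpow mul one h n') else one.

(* The exponential, as the sum of the power series (which is what the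
   functional calculus gives for e^{z h}). *)
Definition expA (R : realType) (V : completeNormedModType R[i])
    (mul : V -> V -> V) (one : V) (h : V) : V :=
  limn (series (fun n => (n`!%:R : R[i])^-1 *: cpow mul one h n)).

Definition eitH (R : realType) (V : completeNormedModType R[i])
    (mul : V -> V -> V) (one : V) (t : R) (H : V) : V :=
  expA mul one ((t%:C * 'i) *: H).

(* The CQ*-algebra setting of the context: A is the completion of A0 with
   respect to the norm a |-> `|j a|, realised through the injective linear
   map j : A0 -> A with dense range, with
     `|j a| <= `|a|_0,  `|j (a b)| <= `|j a| `|b|_0,  `|j a^*| = `|j a|,
   and the products X A := lim A_n A, A X := lim A A_n
   (for any A_n in A0 with j A_n --> X) given by rmul and lmul. *)
Record CQstar_setting (R : realType) (A0 : completeNormedModType R[i])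
    (mul : A0 -> A0 -> A0) (star : A0 -> A0)
    (A : completeNormedModType R[i]) (j : {linear A0 -> A})
    (lmul : A0 -> A -> A) (rmul : A -> A0 -> A) : Prop := {
  cq_inj : injective j;
  cq_dense : closure (range j) = [set: A];
  cq_le : forall a : A0, `|j a| <= `|a|;
  cq_mul : forall a b : A0, `|j (mul a b)| <= `|j a| * `|b|;
  cq_star : forall a : A0, `|j (star a)| = `|j a|;
  cq_rmul : forall (X : A) (a : A0) (u : nat -> A0),
      (fun n => j (u n)) @ \oo --> X ->
      (fun n => j (mul (u n) a)) @ \oo --> rmul X a;
  cq_lmul : forall (X : A) (a : A0) (u : nat -> A0),
      (fun n => j (u n)) @ \oo --> X ->
      (fun n => j (mul a (u n))) @ \oo --> lmul a X
}.

(* Main.v *)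
Require Import Defs.
From HB Require Import structures.
From mathcomp Require Import all_boot all_order all_algebra.
From mathcomp Require Import all_classical all_reals all_analysis.
From mathcomp.real_closed Require Import complex.
From mathcomp Require Import lra.
Import Order.TTheory GRing.Theory Num.Theory.
Import numFieldNormedType.Exports.
Local Open Scope classical_set_scope.
Local Open Scope ring_scope.
Local Open Scope complex_scope.


Definition nm {R : realType} {V : normedModType R[i]} (x : V) : R := complex.Re `|x|.

Lemma normE {R : realType} {V : normedModType R[i]} (x : V) : `|x| = (nm x)%:C.
Proof. by rewrite /nm RRe_real // ger0_real. Qed.

Lemma nm_ge0 {R : realType} {V : normedModType R[i]} (x : V) : 0 <= nm x.
Proof. by rewrite -ler0c -normE. Qed.

Lemma nmD {R : realType} {V : normedModType R[i]} (x y : V) : nm (x + y) <= nm x + nm y.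
Proof. by rewrite -lecR rmorphD /= -!normE ler_normD. Qed.

Lemma nmN {R : realType} {V : normedModType R[i]} (x : V) : nm (- x) = nm x.
Proof. by rewrite /nm normrN. Qed.

Lemma nmB {R : realType} {V : normedModType R[i]} (x y : V) : nm (x - y) <= nm x + nm y.
Proof. by rewrite -(nmN y) nmD. Qed.

Lemma normCE {R : realType} (a : R[i]) : `|a| = (complex.Re `|a|)%:C.
Proof. by rewrite RRe_real // ger0_real. Qed.

Lemma nmZ {R : realType} {V : normedModType R[i]} (a : R[i]) (x : V) :
  nm (a *: x) = complex.Re `|a| * nm x.
Proof.
by rewrite /nm normrZ (normCE a) normE -rmorphM.
Qed.

Lemma normcR {R : realType} (t : R) : `|t%:C| = `|t|%:C.
Proof. by rewrite normc_def /= expr0n /= addr0 sqrtr_sqr. Qed.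

Lemma Re_normcR {R : realType} (t : R) : complex.Re `|t%:C| = `|t|.
Proof. by rewrite normcR. Qed.

Lemma Re_normi {R : realType} : complex.Re `|'i : R[i]| = 1.
Proof. by rewrite normc_def /= expr0n /= add0r expr1n sqrtr1. Qed.

Lemma Re_normVR {R : realType} (t : R) : complex.Re `|(t%:C)^-1| = `|t|^-1.
Proof. by rewrite normfV normcR -fmorphV. Qed.

Lemma Re_normRi {R : realType} (t : R) : complex.Re `|t%:C * 'i| = `|t|.
Proof. by rewrite normrM normcR (normCE 'i) Re_normi -rmorphM /= mulr1. Qed.

Lemma Re_normn {R : realType} (n : nat) : complex.Re `|(n`!%:R : R[i])^-1| <= 1.
Proof.
rewrite normfV -(rmorph_nat (real_complex R)) normcR -fmorphV /=.
rewrite normr_nat invf_le1 ?ltr0n ?fact_gt0 // ler1n fact_gt0 //.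
Qed.


Lemma cvg_nm {R : realType} {V : normedModType R[i]} {T} {F : set_system T} {FF : Filter F}
  {f : T -> V} {l : V} : f @ F --> l ->
  forall eps : R, 0 < eps -> \forall x \near F, nm (l - f x) <= eps.
Proof.
move=> /cvgrPdist_le H e e0; have := H (e%:C); rewrite ltcR => /(_ e0).
by apply: filterS => x; rewrite normE lecR.
Qed.

Lemma nm_cvg {R : realType} {V : normedModType R[i]} {T} {F : set_system T} {FF : Filter F}
  (g : T -> V) :
  (forall eps : R, 0 < eps -> \forall x \near F, nm (g x) <= eps) ->
  (fun x => (`|g x| : R[i]^o)) @ F --> (0 : R[i]^o).
Proof.
move=> H; apply/cvgr0Pnorm_le => e e0.
have er : e \is Num.real by apply: gtr0_real.
have := e0; rewrite ltcE => /andP[_ e0'].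
have := H _ e0'; apply: filterS => x hx.
by rewrite normr_id normE -(RRe_real er) lecR.
Qed.

Lemma lim_nm_le {R : realType} {V : normedModType R[i]} (u : nat -> V) (l : V) (b : R) :
  u @ \oo --> l -> (\forall n \near \oo, nm (u n) <= b) -> nm l <= b.
Proof.
move=> ul ub; apply/ler_addgt0Pr => e e0.
near \oo => n.
have h1 : nm (l - u n) <= e by near: n; exact: cvg_nm ul e e0.
have h2 : nm (u n) <= b by near: n; exact: ub.
have := nmD (l - u n) (u n); rewrite subrK; lra.
Unshelve. all: by end_near.
Qed.


Lemma nm_sum {R : realType} {V : normedModType R[i]} (s : seq nat) (F : nat -> V) :
  nm (\sum_(k <- s) F k) <= \sum_(k <- s) nm (F k).
Proof.
rewrite -lecR -normE rmorph_sum /=.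
under [X in _ <= X]eq_bigr do rewrite -normE.
exact: ler_norm_sum.
Qed.

Lemma cpow_nm {R : realType} {V : completeNormedModType R[i]} {mul : V -> V -> V} {one : V}
  (mul1 : forall x, mul x one = x) (subm : forall x y, nm (mul x y) <= nm x * nm y)
  (h : V) (n : nat) : (0 < n)%N -> nm (cpow mul one h n) <= nm h ^+ n.
Proof.
case: n => // n _; elim: n => [|n IH] /=; first by rewrite mul1 expr1.
rewrite exprS; apply: le_trans (subm _ _) _; apply: ler_wpM2l; [exact: nm_ge0 | exact: IH].
Qed.

Lemma cterm_nm {R : realType} {V : completeNormedModType R[i]} {mul : V -> V -> V} {one : V}
  (mul1 : forall x, mul x one = x) (subm : forall x y, nm (mul x y) <= nm x * nm y)
  (h : V) (n : nat) : (0 < n)%N ->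
  nm ((n`!%:R : R[i])^-1 *: cpow mul one h n) <= nm h ^+ n.
Proof.
move=> n0; rewrite nmZ.
have := Re_normn (R:=R) n; have := nm_ge0 (cpow mul one h n).
have := cpow_nm mul1 subm h n n0.
have : 0 <= complex.Re `|(n`!%:R : R[i])^-1|.
  by rewrite -ler0c -normCE.
nra.
Qed.

Lemma geo_le {R : realType} (r : R) : 0 <= r -> r <= 1/2 ->
  forall d n, \sum_(n <= k < n + d) r ^+ k + 2 * r ^+ (n + d) <= 2 * r ^+ n.
Proof.
move=> r0 r1; elim=> [|d IH] n; first by rewrite addn0 big_geq // add0r.
rewrite addnS big_nat_recr ?leq_addr //= exprS.
have := IH n; have : 0 <= r ^+ (n + d) by exact: exprn_ge0.
nra.
Qed.

Lemma tail_nm {R : realType} {V : completeNormedModType R[i]} {mul : V -> V -> V} {one : V}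
  (mul1 : forall x, mul x one = x) (subm : forall x y, nm (mul x y) <= nm x * nm y)
  (h : V) (hr : nm h <= 1/2) (n d : nat) : (0 < n)%N ->
  nm (\sum_(n <= k < n + d) ((k`!%:R : R[i])^-1 *: cpow mul one h k)) <= 2 * nm h ^+ n.
Proof.
move=> n0; apply: le_trans (nm_sum _ _) _.
apply: (@le_trans _ _ (\sum_(n <= k < n + d) nm h ^+ k)).
  apply: ler_sum_nat => k /andP[nk _]; apply: cterm_nm => //.
  exact: leq_trans n0 nk.
have := geo_le (nm h) (nm_ge0 h) hr d n.
have : 0 <= nm h ^+ (n + d) by apply: exprn_ge0; exact: nm_ge0.
lra.
Qed.

Lemma expA_cvg {R : realType} {V : completeNormedModType R[i]} {mul : V -> V -> V} {one : V}
  (mul1 : forall x, mul x one = x) (subm : forall x y, nm (mul x y) <= nm x * nm y)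
  (h : V) (hr : nm h <= 1/2) :
  series (fun n => (n`!%:R : R[i])^-1 *: cpow mul one h n) @ \oo --> expA mul one h.
Proof.
have : cvg (series (fun n => (n`!%:R : R[i])^-1 *: cpow mul one h n) @ \oo); last by [].
apply/cauchy_cvgP/cauchy_seriesP => e e0.
have er : e \is Num.real by apply: gtr0_real.
have := e0; rewrite ltcE => /andP[_ /= e0'].
have hz : `|nm h| < 1 by rewrite ger0_norm ?nm_ge0 //; lra.
have e2 : 0 < complex.Re e / 2 by lra.
have H1 : \forall t \near \oo, `|nm h ^+ t| < complex.Re e / 2 by apply: (cvgr0_norm_lt _ (cvg_expr hz)).
have H2 : \forall m \near \oo, (0 < m)%N by exists 1%N.
have := filterI H1 H2.
move=> [N _ HN].
exists ([set m | (N <= m)%N], [set m | (N <= m)%N]) => /=; first by split; exists N.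
move=> [a b] /= [Na Nb].
have [ab|ba] := leqP a b; last by rewrite big_geq ?normr0 // ltnW.
have [/= hN a0] := HN a Na.
rewrite -(subnKC ab) normE -(RRe_real er) ltcR.
apply: le_lt_trans (tail_nm mul1 subm h hr _ _ a0) _.
move: hN; rewrite ger0_norm ?exprn_ge0 ?nm_ge0 //; lra.
Qed.

Lemma expA_bound {R : realType} {V : completeNormedModType R[i]} {mul : V -> V -> V} {one : V}
  (mul1 : forall x, mul x one = x) (subm : forall x y, nm (mul x y) <= nm x * nm y)
  (h : V) (hr : nm h <= 1/2) :
  nm (expA mul one h - one - h) <= 2 * nm h ^+ 2.
Proof.
apply: (lim_nm_le (fun N => series (fun n => (n`!%:R : R[i])^-1 *: cpow mul one h n) N - one - h)).
  apply: cvgB; [apply: cvgB; [exact: expA_cvg | exact: cvg_cst] | exact: cvg_cst].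
exists 2%N => // N /= N2.
rewrite /series /= big_ltn; last exact: leq_trans N2.
rewrite big_ltn // /= fact0 invr1 scale1r mul1 scale1r.
rewrite [one + _]addrC addrK addrC addKr.
rewrite -(subnKC N2); exact: (tail_nm mul1 subm h hr 2 (N - 2)).
Qed.

Lemma U_bound1 {R : realType} {V : completeNormedModType R[i]} {mul : V -> V -> V} {one : V}
  (mul1 : forall x, mul x one = x) (subm : forall x y, nm (mul x y) <= nm x * nm y)
  (H : V) (t : R) : `|t| * nm H <= 1/2 ->
  nm (eitH mul one t H - one) <= 2 * nm H * `|t|.
Proof.
move=> ht; rewrite /eitH.
have nh : nm ((t%:C * 'i) *: H) = `|t| * nm H by rewrite nmZ Re_normRi.
have hb := expA_bound mul1 subm ((t%:C * 'i) *: H).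
rewrite nh in hb; have {}hb := hb ht.
have := nmD (expA mul one ((t%:C * 'i) *: H) - one - (t%:C * 'i) *: H) ((t%:C * 'i) *: H).
rewrite subrK nh.
have x0 : 0 <= `|t| * nm H by rewrite mulr_ge0 ?nm_ge0.
have : (`|t| * nm H) ^+ 2 <= (`|t| * nm H) / 2.
  by rewrite expr2; nra.
rewrite (mulrC 2 (nm H)) -mulrA (mulrC (nm H)).
lra.
Qed.

Lemma U_bound2 {R : realType} {V : completeNormedModType R[i]} {mul : V -> V -> V} {one : V}
  (mul1 : forall x, mul x one = x) (subm : forall x y, nm (mul x y) <= nm x * nm y)
  (H : V) (t : R) : t != 0 -> `|t| * nm H <= 1/2 ->
  nm ((t%:C)^-1 *: (eitH mul one t H - one) - 'i *: H) <= 2 * nm H ^+ 2 * `|t|.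
Proof.
move=> t0 ht; rewrite /eitH.
have tC : t%:C != 0 by rewrite eq_complex /= negb_and t0.
have -> : (t%:C)^-1 *: (expA mul one ((t%:C * 'i) *: H) - one) - 'i *: H =
   (t%:C)^-1 *: (expA mul one ((t%:C * 'i) *: H) - one - (t%:C * 'i) *: H).
  by rewrite [in RHS]scalerBr scalerA mulrA mulVf // mul1r.
have nh : nm ((t%:C * 'i) *: H) = `|t| * nm H by rewrite nmZ Re_normRi.
have hb := expA_bound mul1 subm ((t%:C * 'i) *: H).
rewrite nh in hb; have {}hb := hb ht.
rewrite nmZ Re_normVR mulrC ler_pdivrMr ?normr_gt0 //.
have := nm_ge0 H; have := normr_ge0 t.
nra.
Qed.


Lemma dense_seq {R : realType} {A0 A : normedModType R[i]} (j : A0 -> A) :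
  closure (range j) = [set: A] ->
  forall X : A, exists u : nat -> A0, (fun n => j (u n)) @ \oo --> X.
Proof.
move=> cl X.
have : forall n : nat, exists a : A0, nm (X - j a) < n.+1%:R^-1.
  move=> n; have : closure (range j) X by rewrite cl.
  move=> /(_ (ball X ((n.+1%:R^-1)%:C))) [].
    by apply: nbhsx_ballx; rewrite ltcR invr_gt0 ltr0n.
  move=> _ [[a _ <-]]; rewrite -ball_normE /ball_ /= normE ltcR => ?.
  by exists a.
move=> /choice [u hu]; exists u.
apply/cvgrPdist_lt => e e0.
have er : e \is Num.real by apply: gtr0_real.
have := e0; rewrite ltcE => /andP[_ /= e0'].
near=> n; rewrite normE -(RRe_real er) ltcR.
apply: lt_trans (hu n) _.
near: n; exact: (near_infty_natSinv_lt (PosNum e0')).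
Unshelve. all: by end_near.
Qed.

Lemma lim_uniq {R : realType} {A : normedModType R[i]} (u : nat -> A) (a b : A) :
  u @ \oo --> a -> u @ \oo --> b -> a = b.
Proof.
move=> ha hb.
by rewrite -(cvg_lim (@norm_hausdorff _ _) ha) (cvg_lim (@norm_hausdorff _ _) hb).
Qed.

Lemma lim_nm_le2 {R : realType} {V W : normedModType R[i]} (u : nat -> V) (v : nat -> W)
  (l : V) (m : W) (k : R) : u @ \oo --> l -> v @ \oo --> m -> 0 <= k ->
  (forall n, nm (u n) <= k * nm (v n)) -> nm l <= k * nm m.
Proof.
move=> ul vm k0 H; apply/ler_addgt0Pr => e e0.
have e2 : 0 < e / 2 by lra.
have d0 : 0 < e / (2 * (k + 1)) by apply: divr_gt0; lra.
have hd : e = 2 * (k + 1) * (e / (2 * (k + 1))) by rewrite mulrC divfK //; lra.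
move: d0 hd; set d := e / (2 * (k + 1)) => d0 hd.
near \oo => n.
have h1 : nm (l - u n) <= e / 2 by near: n; exact: cvg_nm ul _ e2.
have h2 : nm (m - v n) <= d by near: n; exact: cvg_nm vm _ d0.
have h3 := nmD (l - u n) (u n); rewrite subrK in h3.
have h4 := nmD (v n - m) m; rewrite subrK in h4.
have h5 : nm (v n - m) = nm (m - v n) by rewrite -nmN opprB.
have h6 := H n.
have h7 : k * nm (v n) <= k * (nm m + d).
  by apply: ler_wpM2l => //; lra.
nra.
Unshelve. all: by end_near.
Qed.


Lemma A0_subm {R : realType} {A0 : completeNormedModType R[i]} {mul : A0 -> A0 -> A0}
  {one : A0} {star : A0 -> A0} (hA0 : is_unital_Cstar mul one star) (x y : A0) :
  nm (mul x y) <= nm x * nm y.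
Proof.
case: hA0 => _ [_ [_ [_ [subm _]]]].
by rewrite -lecR rmorphM /= -!normE.
Qed.

Lemma A0_mul1 {R : realType} {A0 : completeNormedModType R[i]} {mul : A0 -> A0 -> A0}
  {one : A0} {star : A0 -> A0} (hA0 : is_unital_Cstar mul one star) (x : A0) :
  mul x one = x.
Proof. by case: hA0 => _ [/(_ x) [_ ->] _]. Qed.

Lemma A0_1mul {R : realType} {A0 : completeNormedModType R[i]} {mul : A0 -> A0 -> A0}
  {one : A0} {star : A0 -> A0} (hA0 : is_unital_Cstar mul one star) (x : A0) :
  mul one x = x.
Proof. by case: hA0 => _ [/(_ x) [-> _] _]. Qed.

Lemma A0_linl {R : realType} {A0 : completeNormedModType R[i]} {mul : A0 -> A0 -> A0}
  {one : A0} {star : A0 -> A0} (hA0 : is_unital_Cstar mul one star) c (x y z : A0) :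
  mul (c *: x + y) z = c *: mul x z + mul y z.
Proof. by case: hA0 => _ [_ [-> _]]. Qed.

Lemma A0_linr {R : realType} {A0 : completeNormedModType R[i]} {mul : A0 -> A0 -> A0}
  {one : A0} {star : A0 -> A0} (hA0 : is_unital_Cstar mul one star) c (x y z : A0) :
  mul z (c *: x + y) = c *: mul z x + mul z y.
Proof. by case: hA0 => _ [_ [_ [-> _]]]. Qed.

Lemma A0_star_nm {R : realType} {A0 : completeNormedModType R[i]} {mul : A0 -> A0 -> A0}
  {one : A0} {star : A0 -> A0} (hA0 : is_unital_Cstar mul one star) (x : A0) :
  nm (star x) = nm x.
Proof.
have key : forall y : A0, nm y <= nm (star y).
  move=> y; have := A0_subm hA0 (star y) y.
  case: hA0 => _ [_ [_ [_ [_ [_ [_ [_ cstar]]]]]]].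
  have : nm (mul (star y) y) = nm y ^+ 2.
    by apply: complexI; rewrite -normE cstar normE rmorphXn.
  move=> ->; have := nm_ge0 y; have := nm_ge0 (star y); nra.
apply/eqP; rewrite eq_le key andbT.
have := key (star x).
by case: hA0 => _ [_ [_ [_ [_ [-> _]]]]].
Qed.

Lemma j_rbound {R : realType} {A0 : completeNormedModType R[i]} {mul : A0 -> A0 -> A0}
  {star : A0 -> A0} {A : completeNormedModType R[i]} {j : {linear A0 -> A}}
  {lmul : A0 -> A -> A} {rmul : A -> A0 -> A}
  (hCQ : CQstar_setting mul star j lmul rmul) (a b : A0) :
  nm (j (mul b a)) <= nm a * nm (j b).
Proof.
by rewrite mulrC -lecR rmorphM /= -!normE (cq_mul hCQ).
Qed.

Lemma j_lbound {R : realType} {A0 : completeNormedModType R[i]} {mul : A0 -> A0 -> A0}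
  {one : A0} {star : A0 -> A0} (hA0 : is_unital_Cstar mul one star)
  {A : completeNormedModType R[i]} {j : {linear A0 -> A}}
  {lmul : A0 -> A -> A} {rmul : A -> A0 -> A}
  (hCQ : CQstar_setting mul star j lmul rmul) (a b : A0) :
  nm (j (mul a b)) <= nm a * nm (j b).
Proof.
have hs : forall x, nm (j (star x)) = nm (j x) by move=> x; rewrite /nm (cq_star hCQ).
rewrite -hs.
have -> : star (mul a b) = mul (star b) (star a).
  by case: hA0 => _ [_ [_ [_ [_ [_ [_ [-> _]]]]]]].
apply: le_trans (j_rbound hCQ _ _) _.
by rewrite (A0_star_nm hA0) hs.
Qed.

Lemma lmul_lin {R : realType} {A0 : completeNormedModType R[i]} {mul : A0 -> A0 -> A0}
  {one : A0} {star : A0 -> A0} (hA0 : is_unital_Cstar mul one star)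
  {A : completeNormedModType R[i]} {j : {linear A0 -> A}}
  {lmul : A0 -> A -> A} {rmul : A -> A0 -> A}
  (hCQ : CQstar_setting mul star j lmul rmul) c (a b : A0) (X : A) :
  lmul (c *: a + b) X = c *: lmul a X + lmul b X.
Proof.
have [u hu] := dense_seq _ (cq_dense hCQ) X.
apply: (lim_uniq (fun n => j (mul (c *: a + b) (u n)))).
  exact: (cq_lmul hCQ hu).
have -> : (fun n => j (mul (c *: a + b) (u n))) =
          (fun n => c *: j (mul a (u n)) + j (mul b (u n))).
  by apply/funext => n; rewrite (A0_linl hA0) linearD linearZ.
apply: cvgD; last exact: (cq_lmul hCQ hu).
apply: cvgZ; first exact: cvg_cst.
exact: (cq_lmul hCQ hu).
Qed.

Lemma rmul_lin {R : realType} {A0 : completeNormedModType R[i]} {mul : A0 -> A0 -> A0}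
  {one : A0} {star : A0 -> A0} (hA0 : is_unital_Cstar mul one star)
  {A : completeNormedModType R[i]} {j : {linear A0 -> A}}
  {lmul : A0 -> A -> A} {rmul : A -> A0 -> A}
  (hCQ : CQstar_setting mul star j lmul rmul) c (a b : A0) (X : A) :
  rmul X (c *: a + b) = c *: rmul X a + rmul X b.
Proof.
have [u hu] := dense_seq _ (cq_dense hCQ) X.
apply: (lim_uniq (fun n => j (mul (u n) (c *: a + b)))).
  exact: (cq_rmul hCQ hu).
have -> : (fun n => j (mul (u n) (c *: a + b))) =
          (fun n => c *: j (mul (u n) a) + j (mul (u n) b)).
  by apply/funext => n; rewrite (A0_linr hA0) linearD linearZ.
apply: cvgD; last exact: (cq_rmul hCQ hu).
apply: cvgZ; first exact: cvg_cst.
exact: (cq_rmul hCQ hu).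
Qed.

Lemma rmul_linl {R : realType} {A0 : completeNormedModType R[i]} {mul : A0 -> A0 -> A0}
  {one : A0} {star : A0 -> A0} (hA0 : is_unital_Cstar mul one star)
  {A : completeNormedModType R[i]} {j : {linear A0 -> A}}
  {lmul : A0 -> A -> A} {rmul : A -> A0 -> A}
  (hCQ : CQstar_setting mul star j lmul rmul) c (Y Z : A) (a : A0) :
  rmul (c *: Y + Z) a = c *: rmul Y a + rmul Z a.
Proof.
have [u hu] := dense_seq _ (cq_dense hCQ) Y.
have [v hv] := dense_seq _ (cq_dense hCQ) Z.
have huv : (fun n => j (c *: u n + v n)) @ \oo --> c *: Y + Z.
  have -> : (fun n => j (c *: u n + v n)) = (fun n => c *: j (u n) + j (v n)).
    by apply/funext => n; rewrite linearD linearZ.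
  apply: cvgD => //; apply: cvgZ => //; exact: cvg_cst.
apply: (lim_uniq (fun n => j (mul (c *: u n + v n) a))).
  exact: (cq_rmul hCQ huv).
have -> : (fun n => j (mul (c *: u n + v n) a)) =
          (fun n => c *: j (mul (u n) a) + j (mul (v n) a)).
  by apply/funext => n; rewrite (A0_linl hA0) linearD linearZ.
apply: cvgD; last exact: (cq_rmul hCQ hv).
apply: cvgZ; first exact: cvg_cst.
exact: (cq_rmul hCQ hu).
Qed.

Lemma lmul1 {R : realType} {A0 : completeNormedModType R[i]} {mul : A0 -> A0 -> A0}
  {one : A0} {star : A0 -> A0} (hA0 : is_unital_Cstar mul one star)
  {A : completeNormedModType R[i]} {j : {linear A0 -> A}}
  {lmul : A0 -> A -> A} {rmul : A -> A0 -> A}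
  (hCQ : CQstar_setting mul star j lmul rmul) (X : A) : lmul one X = X.
Proof.
have [u hu] := dense_seq _ (cq_dense hCQ) X.
apply: (lim_uniq (fun n => j (mul one (u n)))).
  exact: (cq_lmul hCQ hu).
have -> : (fun n => j (mul one (u n))) = (fun n => j (u n)); last by [].
by apply/funext => n; rewrite (A0_1mul hA0).
Qed.

Lemma rmul1 {R : realType} {A0 : completeNormedModType R[i]} {mul : A0 -> A0 -> A0}
  {one : A0} {star : A0 -> A0} (hA0 : is_unital_Cstar mul one star)
  {A : completeNormedModType R[i]} {j : {linear A0 -> A}}
  {lmul : A0 -> A -> A} {rmul : A -> A0 -> A}
  (hCQ : CQstar_setting mul star j lmul rmul) (X : A) : rmul X one = X.
Proof.
have [u hu] := dense_seq _ (cq_dense hCQ) X.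
apply: (lim_uniq (fun n => j (mul (u n) one))).
  exact: (cq_rmul hCQ hu).
have -> : (fun n => j (mul (u n) one)) = (fun n => j (u n)); last by [].
by apply/funext => n; rewrite (A0_mul1 hA0).
Qed.

Lemma lmul_nm {R : realType} {A0 : completeNormedModType R[i]} {mul : A0 -> A0 -> A0}
  {one : A0} {star : A0 -> A0} (hA0 : is_unital_Cstar mul one star)
  {A : completeNormedModType R[i]} {j : {linear A0 -> A}}
  {lmul : A0 -> A -> A} {rmul : A -> A0 -> A}
  (hCQ : CQstar_setting mul star j lmul rmul) (a : A0) (X : A) :
  nm (lmul a X) <= nm a * nm X.
Proof.
have [u hu] := dense_seq _ (cq_dense hCQ) X.
apply: (lim_nm_le2 _ _ _ _ _ (cq_lmul hCQ (a:=a) hu) hu (nm_ge0 a)).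
move=> n; exact: (j_lbound hA0 hCQ).
Qed.

Lemma rmul_nm {R : realType} {A0 : completeNormedModType R[i]} {mul : A0 -> A0 -> A0}
  {one : A0} {star : A0 -> A0} (hA0 : is_unital_Cstar mul one star)
  {A : completeNormedModType R[i]} {j : {linear A0 -> A}}
  {lmul : A0 -> A -> A} {rmul : A -> A0 -> A}
  (hCQ : CQstar_setting mul star j lmul rmul) (X : A) (a : A0) :
  nm (rmul X a) <= nm X * nm a.
Proof.
have [u hu] := dense_seq _ (cq_dense hCQ) X.
rewrite mulrC.
apply: (lim_nm_le2 _ _ _ _ _ (cq_rmul hCQ (a:=a) hu) hu (nm_ge0 a)).
move=> n; exact: (j_rbound hCQ).
Qed.


Lemma lin_props {R : realType} {V W : lmodType R[i]} (f : V -> W) :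
  (forall c a b, f (c *: a + b) = c *: f a + f b) ->
  [/\ f 0 = 0, (forall a b, f (a - b) = f a - f b),
      (forall a b, f (a + b) = f a + f b) & (forall c a, f (c *: a) = c *: f a)].
Proof.
move=> hf.
have f0 : f 0 = 0.
  have := hf 1 0 0; rewrite !scale1r addr0 => h.
  by apply: (@addrI _ (f 0)); rewrite addr0 -h.
split => //.
- move=> a b; have -> : a - b = (-1) *: b + a by rewrite scaleN1r addrC.
  by rewrite hf scaleN1r addrC.
- by move=> a b; have := hf 1 a b; rewrite !scale1r.
- by move=> c a; have := hf c a 0; rewrite !addr0 f0 addr0.
Qed.

Lemma zmod_id {R : realType} {V : lmodType R[i]} (s k : R[i]) (a b c d x y : V) :
  s *: (a - b) + k *: c - k *: (c - d) + (s *: (b - x) - k *: y) =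
  s *: (a - x) - k *: (y - d).
Proof.
rewrite !scalerBr.
move: (s *: a) (s *: b) (k *: c) (k *: d) (s *: x) (k *: y) => A B C D X Y.
rewrite !opprB [A - B + C + _]addrA (addrAC (A - B + C)) addrK.
by rewrite -!addrA (addrCA (-B)) addKr (addrCA (-X)).
Qed.

Lemma nm_cvg_lin {R : realType} {V : normedModType R[i]} (g : R -> V) (C : R) :
  (\forall t \near (0 : R)^', nm (g t) <= C * `|t|) ->
  (fun t => (`|g t| : R[i]^o)) @ (0 : R)^' --> (0 : R[i]^o).
Proof.
move=> H; apply: nm_cvg => e e0.
have k0 : 0 < `|C| + 1 by rewrite ltr_pwDr ?normr_ge0.
have d0 : 0 < e / (`|C| + 1) by apply: divr_gt0.
near=> t.
have h1 : nm (g t) <= C * `|t| by near: t.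
have h2 : `|t| < e / (`|C| + 1) by near: t; apply: dnbhs0_lt.
apply: le_trans h1 _.
move: h2; rewrite ltr_pdivlMr // => h2.
have := ler_norm C; have := normr_ge0 t; have := normr_ge0 C.
nra.
Unshelve. all: by end_near.
Qed.


Theorem lemma5p2 (R : realType) (A0 : completeNormedModType R[i])
    (mul : A0 -> A0 -> A0) (one : A0) (star : A0 -> A0)
    (hA0 : is_unital_Cstar mul one star)
    (A : completeNormedModType R[i]) (j : {linear A0 -> A})
    (lmul : A0 -> A -> A) (rmul : A -> A0 -> A)
    (hCQ : CQstar_setting mul star j lmul rmul) (H : A0) (X : A) :
  let U := fun t : R => eitH mul one t H in
  let alpha := fun (t : R) (Y : A) => rmul (lmul (U t) Y) (U (- t)) in
  ((fun t : R => (`|lmul (U t) X - X| : R[i]^o)) @ 0^' --> (0 : R[i]^o)) /\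
  ((fun t : R => (`|rmul X (U t) - X| : R[i]^o)) @ 0^' --> (0 : R[i]^o)) /\
  ((fun t : R => (`|lmul ((t%:C)^-1 *: (U t - one)) X
                        - 'i *: lmul H X| : R[i]^o)) @ 0^' --> (0 : R[i]^o)) /\
  ((fun t : R => (`|rmul X ((t%:C)^-1 *: (U t - one))
                        - 'i *: rmul X H| : R[i]^o)) @ 0^' --> (0 : R[i]^o)) /\
  ((fun t : R => (`|alpha t X - X| : R[i]^o)) @ 0^' --> (0 : R[i]^o)) /\
  ((fun t : R => (`|(t%:C)^-1 *: (alpha t X - X)
                        - 'i *: (lmul H X - rmul X H)| : R[i]^o))
        @ 0^' --> (0 : R[i]^o)).
Proof.
move=> U alpha.
have mul1 := A0_mul1 hA0.
have subm := A0_subm hA0.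
have [_ lB lD lZ] := lin_props (fun a => lmul a X) (fun c a b => lmul_lin hA0 hCQ c a b X).
have l1 := lmul1 hA0 hCQ X.
have rB : forall Y a b, rmul Y (a - b) = rmul Y a - rmul Y b.
  by move=> Y; have [_ rB _ _] := lin_props (rmul Y) (fun c a b => rmul_lin hA0 hCQ c a b Y).
have rD : forall Y a b, rmul Y (a + b) = rmul Y a + rmul Y b.
  by move=> Y; have [_ _ rD _] := lin_props (rmul Y) (fun c a b => rmul_lin hA0 hCQ c a b Y).
have rZ : forall Y c a, rmul Y (c *: a) = c *: rmul Y a.
  by move=> Y; have [_ _ _ rZ] := lin_props (rmul Y) (fun c a b => rmul_lin hA0 hCQ c a b Y).
have rBl : forall a Y Z, rmul (Y - Z) a = rmul Y a - rmul Z a.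
  by move=> a; have [_ rBl _ _] := lin_props (rmul^~ a) (fun c Y Z => rmul_linl hA0 hCQ c Y Z a).
have r1 := rmul1 hA0 hCQ.
have lnm := lmul_nm hA0 hCQ.
have rnm := rmul_nm hA0 hCQ.
set K := nm H; set nX := nm X; set n1 := nm one.
have K0 : 0 <= K by exact: nm_ge0.
have nX0 : 0 <= nX by exact: nm_ge0.
have n10 : 0 <= n1 by exact: nm_ge0.
have key : \forall t \near (0 : R)^', t != 0 /\ `|t| * K <= 1/2.
  near=> t; split; first by near: t; exact: nbhs_dnbhs_neq.
  have : `|t| < 1 / (2 * (K + 1)).
    by near: t; apply: dnbhs0_lt; apply: divr_gt0; lra.
  rewrite ltr_pdivlMr; last by lra.
  have := normr_ge0 t; nra.
have B1 : forall t : R, `|t| * K <= 1/2 -> nm (U t - one) <= 2 * K * `|t|.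
  by move=> t ht; exact: (U_bound1 mul1 subm H t ht).
have B2 : forall t : R, t != 0 -> `|t| * K <= 1/2 ->
    nm ((t%:C)^-1 *: (U t - one) - 'i *: H) <= 2 * K ^+ 2 * `|t|.
  by move=> t t0 ht; exact: (U_bound2 mul1 subm H t t0 ht).
split.
  apply: (nm_cvg_lin _ (2 * K * nX)); apply: filterS key => t [t0 ht].
  rewrite -{2}l1 -lB; apply: le_trans (lnm _ _) _.
  have := B1 t ht; have := nm_ge0 (U t - one); nra.
split.
  apply: (nm_cvg_lin _ (2 * K * nX)); apply: filterS key => t [t0 ht].
  rewrite -{2}(r1 X) -rB; apply: le_trans (rnm _ _) _.
  have := B1 t ht; have := nm_ge0 (U t - one); nra.
split.
  apply: (nm_cvg_lin _ (2 * K ^+ 2 * nX)); apply: filterS key => t [t0 ht].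
  rewrite -lZ -lB; apply: le_trans (lnm _ _) _.
  have := B2 t t0 ht; have := nm_ge0 ((t%:C)^-1 *: (U t - one) - 'i *: H); nra.
split.
  apply: (nm_cvg_lin _ (2 * K ^+ 2 * nX)); apply: filterS key => t [t0 ht].
  rewrite -rZ -rB; apply: le_trans (rnm _ _) _.
  have := B2 t t0 ht; have := nm_ge0 ((t%:C)^-1 *: (U t - one) - 'i *: H); nra.
have hL : forall t : R, `|t| * K <= 1/2 -> nm (lmul (U t) X) <= (n1 + 1) * nX.
  move=> t ht; apply: le_trans (lnm _ _) _; apply: ler_wpM2r => //.
  have := nmD (U t - one) one; rewrite subrK.
  have := B1 t ht; have := normr_ge0 t; nra.
have hLX : forall t : R, `|t| * K <= 1/2 -> nm (lmul (U t) X - X) <= 2 * K * `|t| * nX.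
  move=> t ht; rewrite -{2}l1 -lB; apply: le_trans (lnm _ _) _.
  apply: ler_wpM2r => //; exact: B1.
split.
  apply: (nm_cvg_lin _ ((n1 + 1) * nX * (2 * K) + 2 * K * nX)).
  apply: filterS key => t [t0 ht].
  have htN : `|- t| * K <= 1/2 by rewrite normrN.
  rewrite /alpha.
  have -> : rmul (lmul (U t) X) (U (- t)) - X =
      rmul (lmul (U t) X) (U (- t) - one) + (lmul (U t) X - X).
    by rewrite rB r1 addrA subrK.
  apply: le_trans (nmD _ _) _.
  have h1 : nm (rmul (lmul (U t) X) (U (- t) - one)) <= (n1 + 1) * nX * (2 * K * `|t|).
    apply: le_trans (rnm _ _) _; apply: ler_pM; rewrite ?nm_ge0 ?hL //.
    by have := B1 (- t) htN; rewrite normrN.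
  have h2 := hLX t ht.
  lra.
apply: (nm_cvg_lin _ ((n1 + 1) * nX * (2 * K ^+ 2) + 2 * K * nX * K + 2 * K ^+ 2 * nX)).
apply: filterS key => t [t0 ht].
have htN : `|- t| * K <= 1/2 by rewrite normrN.
have t0N : - t != 0 by rewrite oppr_eq0.
rewrite /alpha.
set L := lmul (U t) X.
set Dp := (t%:C)^-1 *: (U (- t) - one) + 'i *: H.
set Ep := (t%:C)^-1 *: (U t - one) - 'i *: H.
have -> : (t%:C)^-1 *: (rmul L (U (- t)) - X) - 'i *: (lmul H X - rmul X H) =
    rmul L Dp - 'i *: rmul (L - X) H + lmul Ep X.
  rewrite /Dp /Ep rD !rZ rB r1 rBl lB !lZ lB l1.
  by rewrite zmod_id.
have hDp : nm Dp <= 2 * K ^+ 2 * `|t|.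
  have := B2 (- t) t0N htN; rewrite normrN.
  have -> : ((- t)%:C)^-1 *: (U (- t) - one) - 'i *: H = - Dp.
    by rewrite /Dp rmorphN invrN scaleNr opprD.
  by rewrite nmN.
have hEp : nm Ep <= 2 * K ^+ 2 * `|t| by exact: B2.
have h1 : nm (rmul L Dp) <= (n1 + 1) * nX * (2 * K ^+ 2 * `|t|).
  apply: le_trans (rnm _ _) _; apply: ler_pM; rewrite ?nm_ge0 ?hL //.
have h2 : nm ('i *: rmul (L - X) H) <= 2 * K * `|t| * nX * K.
  rewrite nmZ Re_normi mul1r; apply: le_trans (rnm _ _) _.
  apply: ler_wpM2r => //; exact: hLX.
have h3 : nm (lmul Ep X) <= 2 * K ^+ 2 * `|t| * nX.
  apply: le_trans (lnm _ _) _; apply: ler_wpM2r => //.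
have := nmB (rmul L Dp) ('i *: rmul (L - X) H).
have := nmD (rmul L Dp - 'i *: rmul (L - X) H) (lmul Ep X).
lra.
Unshelve. all: by end_near.
Qed.
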